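(* Let $\mathcal{H}$ be a Hilbert space and $T\in\mathcal{B}(\mathcal{H})$ a convex operator, i.e. $T^{*2}T^2-2T^*T+I\ge0$, satisfying $$c:=\sup_{n\ge0}\frac{\|T^n\|^2}{n+1}<\infty.$$ Let $\Delta=\frac12T^{*2}T^2-T^*T+\frac12 I$ (a positive operator) and let $T_1$ on $\mathcal{H}_1=\mathcal{H}\oplus\mathcal{H}$ be given by the block matrix $$T_1=\begin{pmatrix}T&0\\ \Delta^{1/2}&0\end{pmatrix}.$$ Then: (i) $\|T_1^nh\|^2=\frac12\big(\|T^{n+1}h\|^2+\|T^{n-1}h\|^2\big)$ for all $h\in\mathcal{H}\cong\mathcal{H}\oplus\{0\}$ and all $n\ge1$; (ii) $\|T_1^n\|^2\le c(n+1)$ for all $n\ge0$; (iii) $T_1$ is convex. *)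

(* Defs.v *)
From HB Require Import structures.
From mathcomp Require Import all_boot all_order all_algebra.
From mathcomp Require Import complex.
From mathcomp Require Import boolp classical_sets reals.
Set Implicit Arguments. Unset Strict Implicit. Unset Printing Implicit Defensive.
Import Order.TTheory GRing.Theory Num.Theory.
Local Open Scope ring_scope.
Local Open Scope classical_set_scope.

Section Hilbert.
Variables (R : realType) (H : lmodType R[i]) (ip : H -> H -> R[i]).

Definition nsq (x : H) : R := complex.Re (ip x x).
Definition nrm (x : H) : R := Num.sqrt (nsq x).

Definition is_inner_product : Prop :=
  [/\ (forall (a : R[i]) x y z, ip (a *: x + y) z = a * ip x z + ip y z),
      (forall x y, ip y x = (ip x y)^*),
      (forall x, 0 <= ip x x) &
      (forall x, ip x x = 0 -> x = 0)].

Definition complete_ip : Prop :=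
  forall u : nat -> H,
    (forall e : R, 0 < e -> exists N : nat, forall m n, (N <= m)%N -> (N <= n)%N ->
        nrm (u m - u n) < e) ->
    exists l : H, forall e : R, 0 < e -> exists N : nat, forall n, (N <= n)%N ->
        nrm (u n - l) < e.

Definition is_hilbert : Prop := is_inner_product /\ complete_ip.

Definition bounded_op (A : H -> H) : Prop :=
  exists K : R, forall x, nrm (A x) <= K * nrm x.

Definition is_bounded_linear (A : H -> H) : Prop := linear A /\ bounded_op A.

Definition opnorm (A : H -> H) : R := sup [set nrm (A x) | x in [set x | nrm x <= 1]].

Definition adjoint (A As : H -> H) : Prop := forall x y, ip (A x) y = ip x (As y).

Definition posop (A : H -> H) : Prop := forall h, 0 <= ip (A h) h.

Definition convex_op (T Ts : H -> H) : Prop :=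
  posop (fun h => Ts (Ts (T (T h))) - (Ts (T h)) *+ 2 + h).

End Hilbert.

Definition ip_sum (R : realType) (H : lmodType R[i]) (ip : H -> H -> R[i])
  (u v : H * H) : R[i] := ip u.1 v.1 + ip u.2 v.2.

Definition Delta (R : realType) (H : lmodType R[i]) (T Ts : H -> H) (h : H) : H :=
  2^-1 *: Ts (Ts (T (T h))) - Ts (T h) + 2^-1 *: h.

(* T1 = [[T, 0], [D, 0]] on H (+) H, where D plays the role of Delta^{1/2} *)
Definition T1op (R : realType) (H : lmodType R[i]) (T D : H -> H) (u : H * H) : H * H :=
  (T u.1, D u.1).

(* Main.v *)
Require Import Defs.
From HB Require Import structures.
From mathcomp Require Import all_boot all_order all_algebra.
From mathcomp Require Import complex.
From mathcomp Require Import boolp classical_sets reals.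
From mathcomp Require Import ring lra.
Import Order.TTheory GRing.Theory Num.Theory.
Local Open Scope ring_scope.
Local Open Scope classical_set_scope.

Section Aux.
Local Open Scope complex_scope.
Variables (R : realType) (H : lmodType R[i]) (ip : H -> H -> R[i]).
Hypothesis hip : is_inner_product ip.

Lemma ipDZ a x y z : ip (a *: x + y) z = a * ip x z + ip y z.
Proof. by case: hip. Qed.
Lemma ipDl x y z : ip (x + y) z = ip x z + ip y z.
Proof. by rewrite -[x]scale1r ipDZ mul1r scale1r. Qed.
Lemma ip0l z : ip 0 z = 0.
Proof.
have h := ipDl 0 0 z; rewrite addr0 in h.
by apply/(addrI (ip 0 z)); rewrite addr0 -h.
Qed.
Lemma ipZl a x z : ip (a *: x) z = a * ip x z.
Proof. by rewrite -[a *: x]addr0 ipDZ ip0l addr0. Qed.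
Lemma ipNl x z : ip (- x) z = - ip x z.
Proof. by rewrite -scaleN1r ipZl mulN1r. Qed.
Lemma ipBl x y z : ip (x - y) z = ip x z - ip y z.
Proof. by rewrite ipDl ipNl. Qed.
Lemma ipMn2l x z : ip (x *+ 2) z = ip x z *+ 2.
Proof. by rewrite !mulr2n ipDl. Qed.
Lemma ipJ x y : ip y x = conjc (ip x y).
Proof. by case: hip. Qed.
Lemma ipxx x : ip x x = (nsq ip x)%:C.
Proof. by rewrite /nsq RRe_real // ger0_real //; case: hip. Qed.
Lemma adjl {A As : H -> H} (hA : adjoint ip A As) x y : ip (As y) x = ip y (A x).
Proof. by rewrite ipJ -hA -ipJ. Qed.
Lemma nsq_ge0 x : 0 <= nsq ip x.
Proof. by rewrite -ler0c -ipxx; case: hip. Qed.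
Lemma nsq_eq0 x : nsq ip x = 0 -> x = 0.
Proof. move=> h; case: hip => _ _ _; apply; by rewrite ipxx h. Qed.
Lemma nsqZ (r : R) x : nsq ip (r%:C *: x) = r ^+ 2 * nsq ip x.
Proof.
rewrite /nsq ipZl ipJ ipZl ipxx -rmorphM conjc_real -rmorphM /=.
by rewrite mulrA -expr2.
Qed.
Lemma nsq0 : nsq ip 0 = 0.
Proof. by rewrite /nsq ip0l. Qed.
Lemma nrm0 : nrm ip 0 = 0.
Proof. by rewrite /nrm nsq0 sqrtr0. Qed.
Lemma nrm_ge0 x : 0 <= nrm ip x.
Proof. exact: sqrtr_ge0. Qed.
Lemma nrm_sq x : nrm ip x ^+ 2 = nsq ip x.
Proof. by rewrite sqr_sqrtr // nsq_ge0. Qed.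
Lemma nrmZ (r : R) x : 0 <= r -> nrm ip (r%:C *: x) = r * nrm ip x.
Proof. by move=> r0; rewrite /nrm nsqZ sqrtrM ?sqrtr_sqr ?ger0_norm // sqr_ge0. Qed.

Lemma lin0 (A : H -> H) : linear A -> A 0 = 0.
Proof.
move=> hA; have h := hA 1 0 0; rewrite scale1r addr0 scale1r in h.
by apply/(addrI (A 0)); rewrite addr0 -h.
Qed.
Lemma linZ (A : H -> H) : linear A -> forall a x, A (a *: x) = a *: A x.
Proof. by move=> hA a x; rewrite -[a *: x]addr0 hA lin0 // addr0. Qed.

Lemma opnorm_bound A : linear A -> bounded_op ip A ->
  forall x, nsq ip (A x) <= opnorm ip A ^+ 2 * nsq ip x.
Proof.
move=> hA [K hK] x.
set S := [set nrm ip (A y) | y in [set y | nrm ip y <= 1]].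
have hS : has_sup S.
  split; first by exists (nrm ip (A 0)), 0 => //=; rewrite nrm0.
  exists `|K| => _ [y /= hy <-].
  apply: (le_trans (hK y)); apply: (le_trans (y := `|K| * nrm ip y)).
    by apply: ler_wpM2r; [exact: nrm_ge0 | exact: ler_norm].
  by rewrite -[X in _ <= X]mulr1; apply: ler_wpM2l.
have [x0|xn0] := eqVneq (nsq ip x) 0.
  by rewrite (nsq_eq0 _ x0) lin0 // nsq0 mulr0.
set s := nrm ip x.
have s0 : 0 < s.
  rewrite lt0r sqrtr_ge0 andbT sqrtr_eq0 -ltNge lt0r xn0; exact: nsq_ge0.
set y := (s^-1)%:C *: x.
have hy : nrm ip y = 1.
  by rewrite /y nrmZ ?invr_ge0 ?(ltW s0) // mulVf // gt_eqF.
have hAy : nrm ip (A y) <= opnorm ip A.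
  apply: sup_upper_bound => //; exists y => //.
  by rewrite /= hy.
have hs' : 0 <= s^-1 by rewrite invr_ge0 ltW.
rewrite /y linZ // nrmZ // in hAy.
have h2 : nrm ip (A x) <= opnorm ip A * s.
  by rewrite -ler_pdivrMr // mulrC.
rewrite -!nrm_sq -/s -exprMn expr2 [X in _ <= X]expr2.
by apply: ler_pM => //; exact: nrm_ge0.
Qed.

Lemma convex_real A As (hA : adjoint ip A As) u :
  ip (As (As (A (A u))) - As (A u) *+ 2 + u) u =
  (nsq ip (A (A u)) - nsq ip (A u) *+ 2 + nsq ip u)%:C.
Proof. by rewrite ipDl ipBl ipMn2l !(adjl hA) !ipxx rmorphD rmorphB rmorphMn. Qed.

End Aux.
Arguments ipDZ {R H ip}.
Arguments ipDl {R H ip}.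
Arguments ip0l {R H ip}.
Arguments ipZl {R H ip}.
Arguments ipNl {R H ip}.
Arguments ipBl {R H ip}.
Arguments ipMn2l {R H ip}.
Arguments ipJ {R H ip}.
Arguments ipxx {R H ip}.
Arguments adjl {R H ip} hip {A As}.
Arguments nsq_ge0 {R H ip}.
Arguments nsq_eq0 {R H ip}.
Arguments nsqZ {R H ip}.
Arguments nsq0 {R H ip}.
Arguments nrm0 {R H ip}.
Arguments nrm_ge0 {R H ip}.
Arguments nrm_sq {R H ip}.
Arguments nrmZ {R H ip}.
Arguments opnorm_bound {R H ip}.
Arguments convex_real {R H ip} hip {A As}.
Arguments lin0 {R H}. Arguments linZ {R H}.

Lemma ReD (R : realType) (x y : R[i]) : complex.Re (x + y) = complex.Re x + complex.Re y.
Proof. by case: x => ? ?; case: y. Qed.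

Lemma ip_sum_ip (R : realType) (H : lmodType R[i]) (ip : H -> H -> R[i]) :
  is_inner_product ip -> is_inner_product (ip_sum ip).
Proof.
move=> hip; split.
- move=> a [x1 x2] [y1 y2] [z1 z2]; rewrite /ip_sum /= !(ipDZ hip).
  by rewrite mulrDr addrACA.
- move=> [x1 x2] [y1 y2]; rewrite /ip_sum /= rmorphD.
  by rewrite (ipJ hip x1 y1) (ipJ hip x2 y2).
- move=> [x1 x2]; rewrite /ip_sum /=; apply: addr_ge0; by case: hip.
- move=> [x1 x2]; rewrite /ip_sum /= => /eqP.
  case: (hip) => _ _ h0 hd.
  rewrite paddr_eq0 ?h0 // => /andP[/eqP h1 /eqP h2].
  by rewrite (hd _ h1) (hd _ h2).
Qed.

Arguments ip_sum_ip {R H ip}.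

Theorem lemma3p1 (R : realType) (H : lmodType R[i]) (ip : H -> H -> R[i])
  (hH : is_hilbert ip)
  (T Ts : H -> H) (hT : is_bounded_linear ip T) (hTs : adjoint ip T Ts)
  (hconv : convex_op ip T Ts)
  (hc : has_ubound [set (opnorm ip (iter n T)) ^+ 2 / n.+1%:R | n in [set: nat]])
  (D : H -> H) (hD : is_bounded_linear ip D) (hDsa : adjoint ip D D)
  (hDpos : posop ip D) (hDD : forall h, D (D h) = Delta T Ts h) :
  let c := sup [set (opnorm ip (iter n T)) ^+ 2 / n.+1%:R | n in [set: nat]] in
  let T1 := T1op T D in
  let ip1 := ip_sum ip in
  (forall (n : nat) (h : H), (1 <= n)%N ->
      nsq ip1 (iter n T1 (h, 0)) =
      2^-1 * (nsq ip (iter n.+1 T h) + nsq ip (iter n.-1 T h)))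
  /\ (forall n : nat, (opnorm ip1 (iter n T1)) ^+ 2 <= c * n.+1%:R)
  /\ (forall T1s : H * H -> H * H, adjoint ip1 T1 T1s -> convex_op ip1 T1 T1s).
Proof.
move=> c T1 ip1.
have hip := hH.1.
have hip1 : is_inner_product ip1 := ip_sum_ip hip.
have nsq1 : forall p q, nsq ip1 (p, q) = nsq ip p + nsq ip q.
  by move=> p q; rewrite /nsq /ip1 /ip_sum /= ReD.
have fst : forall n u, (iter n T1 u).1 = iter n T u.1.
  by elim=> //= n IH u; rewrite /T1 /T1op /= -IH.
have iterS1 : forall n u, iter n.+1 T1 u = (iter n.+1 T u.1, D (iter n T u.1)).
  by move=> n u; rewrite iterS /T1 /T1op fst.
have h2 : ((2^-1 : R)%:C)%C = 2^-1 :> R[i] by rewrite fmorphV rmorph_nat.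
have core : forall g, nsq ip (D g) =
    2^-1 * nsq ip (T (T g)) - nsq ip (T g) + 2^-1 * nsq ip g.
  move=> g; apply: complexI.
  rewrite -(ipxx hip) -(adjl hip hDsa) hDD /Delta (ipDl hip) (ipBl hip).
  rewrite !(ipZl hip) !(adjl hip hTs) !(ipxx hip) rmorphD rmorphB !rmorphM !fmorphV !rmorph_nat.
  done.
split.
  move=> n h; case: n => // m _.
  rewrite iterS1 nsq1 core /=; lra.
split.
  case: hT => linT0 [K hK].
  have linT : forall k, linear (iter k T).
    elim => [|k IH] a u v //=.
    by rewrite IH linT0.
  have bndT : forall k, bounded_op ip (iter k T).
    elim => [|k [K' hK']]; first by exists 1 => x; rewrite mul1r.
    exists (`|K| * K') => x /=.
    apply: (le_trans (hK _)); rewrite -mulrA.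
    have h1 : K * nrm ip (iter k T x) <= `|K| * nrm ip (iter k T x).
      by apply: ler_wpM2r; [exact: nrm_ge0 | exact: ler_norm].
    apply: (le_trans h1); apply: ler_wpM2l => //; exact: hK'.
  have cub : forall k, opnorm ip (iter k T) ^+ 2 <= c * k.+1%:R.
    move=> k; rewrite -ler_pdivrMr ?ltr0Sn //.
    apply: sup_upper_bound; last by exists k.
    by split => //; exists (opnorm ip (iter 0 T) ^+ 2 / 1%:R); exists 0%N.
  have c0 : 0 <= c.
    by have := le_trans (sqr_ge0 _) (cub 0%N); rewrite mulr1.
  have bnd : forall k a, nsq ip (iter k T a) <= c * k.+1%:R * nsq ip a.
    move=> k a; apply: le_trans (opnorm_bound hip _ (linT k) (bndT k) a) _.
    by apply: ler_wpM2r; [exact: nsq_ge0 | exact: cub].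
  have elem : forall n u, nrm ip1 u <= 1 -> nsq ip1 (iter n T1 u) <= c * n.+1%:R.
    move=> n [a b] hu.
    have hu2 : nsq ip a + nsq ip b <= 1.
      rewrite -nsq1 -(nrm_sq hip1).
      by rewrite expr2; apply: mulr_ile1; rewrite ?nrm_ge0.
    have hu3 : 0 <= 1 - (nsq ip a + nsq ip b) by rewrite subr_ge0.
    have ha := nsq_ge0 hip a; have hb := nsq_ge0 hip b.
    case: n => [|m].
      rewrite /= nsq1.
      have := bnd 0%N a; have := bnd 0%N b; rewrite /=.
      have := mulr_ge0 c0 (ler01 : (0:R) <= 1).
      have := mulr_ge0 c0 hu3.
      lra.
    rewrite iterS1 nsq1 core /=.
    have := bnd m.+2 a; have := bnd m a; rewrite /=.
    have e3 : (m.+3)%:R = m%:R + 3 :> R by rewrite -addn3 natrD.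
    have e2 : (m.+2)%:R = m%:R + 2 :> R by rewrite -addn2 natrD.
    have e1 : (m.+1)%:R = m%:R + 1 :> R by rewrite -addn1 natrD.
    rewrite e3 e2 e1.
    have hm : (0 : R) <= m%:R + 2 by rewrite addr_ge0.
    have := mulr_ge0 (mulr_ge0 c0 hm) hu3.
    have := mulr_ge0 (mulr_ge0 c0 hm) hb.
    lra.
  move=> n.
  rewrite /opnorm.
  set S1 := [set nrm ip1 (iter n T1 u) | u in _].
  have ub : ubound S1 (Num.sqrt (c * n.+1%:R)).
    move=> _ [u hu <-]; rewrite /nrm; apply: ler_wsqrtr; exact: elem.
  have hS1 : S1 !=set0.
    by exists (nrm ip1 (iter n T1 0)), 0 => //; rewrite /= (nrm0 hip1) ler01.
  have le1 := ge_sup hS1 ub.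
  have ge0 : 0 <= sup S1.
    apply: le_trans (nrm_ge0 (iter n T1 0)) _.
    apply: sup_upper_bound; first by split => //; exists (Num.sqrt (c * n.+1%:R)).
    by exists 0 => //; rewrite /= (nrm0 hip1) ler01.
  have cn0 : 0 <= c * n.+1%:R by apply: mulr_ge0 => //; apply: ltW (ltr0Sn _ _).
  rewrite -(sqr_sqrtr cn0) !expr2.
  exact: ler_pM.
move=> T1s hadj; rewrite /convex_op /posop => -[a b].
rewrite (convex_real hip1 hadj) ler0c /T1 /T1op /= !nsq1 !core.
have := hconv (T a); rewrite /= (convex_real hip hTs) ler0c.
have := nsq_ge0 hip b.
rewrite !mulr2n -[(1 + 1 : R)]/(2%:R : R). lra.
Qed.
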